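(* Let $G$ be a simple graph with vertex set $V$, $\mu$ a positive integer, and $\mathcal K$ a clique partition of $\mu G$. Let $V^*$ be the set of $\mathcal K$-essential vertices, $G^*=G[V^*]$ the induced subgraph, and $\mathcal K^*$ the multiset of nonempty restrictions $K[V^*]$ of cliques $K\in\mathcal K$ to $V^*$ (which, when $V^*\neq\emptyset$, is a clique partition of $\mu G^*$). Then $$\lambda(G)=-\frac{r(\mathcal K)}{\mu}\quad\text{if and only if}\quad V^*\ne\emptyset\ \text{and}\ \lambda(G^* )=-\frac{r(\mathcal K^* )}{\mu}.$$ Moreover, if $\lambda(G)=-r(\mathcal K)/\mu$, then $\lambda(G)=\lambda(G^* )$ and $r_u(\mathcal K^* )=r(\mathcal K)$ for all $u\in V^*$.
   Context: $\lambda(\cdot)$ is the smallest adjacency eigenvalue. A clique of $G$ is a complete subgraph on at least two vertices. A clique partition of $\mu G$ ($\mu$ a positive integer) is a finite multiset $\mathcal K$ of cliques of $G$ such that every edge of $G$ lies in exactly $\mu$ members of $\mathcal K$ (with multiplicity); $r_u(\mathcal K)$ is the number of members containing vertex $u$ and $r(\mathcal K)=\max_u r_u(\mathcal K)$. The $\mathcal K$-essential vertices are defined as follows: let $V^1=\{u\in V: r_u(\mathcal K)=r(\mathcal K)\}$, and for $i\ge1$ let $V^{i+1}=V^i\setminus\{v: V(K)\cap V^i=\{v\}\text{ for some }K\in\mathcal K\}$; the sequence stabilizes at a set $V^*$ (possibly empty), whose elements are the $\mathcal K$-essential vertices. Every clique of $\mathcal K$ is then either disjoint from $V^*$ or meets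 it in at least two vertices. *)

(* Defs.v *)
From HB Require Import structures.
From mathcomp Require Import all_boot all_order all_algebra.
Set Implicit Arguments. Unset Strict Implicit. Unset Printing Implicit Defensive.
Import Order.TTheory GRing.Theory Num.Theory.

(* A simple graph on vertex type T: a symmetric irreflexive relation e. *)

(* Adjacency matrix of the induced subgraph G[S], indexed by 'I_#|S|
   through enum_val (G itself is G[setT]). *)
Definition adj (R : rcfType) (T : finType) (e : rel T) (S : {set T})
  : 'M[R]_#|S| :=
  (\matrix_(i, j) (e (enum_val i) (enum_val j))%:R)%R.

Definition is_lambda (R : rcfType) (n : nat) (A : 'M[R]_n) (x : R) : Prop :=
  eigenvalue A x /\ (forall y, eigenvalue A y -> (x <= y)%R).

Definition is_clique (T : finType) (e : rel T) (K : {set T}) : Prop :=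
  1 < #|K| /\ (forall u v, u \in K -> v \in K -> u != v -> e u v).

(* Clique partition of mu G: a multiset (seq) of cliques such that every edge
   lies in exactly mu members (counted with multiplicity). *)
Definition clique_partition (T : finType) (e : rel T) (mu : nat)
  (Ks : seq {set T}) : Prop :=
  (forall K, K \in Ks -> is_clique e K) /\
  (forall u v, e u v -> count (fun K : {set T} => (u \in K) && (v \in K)) Ks = mu).

Definition r_at (T : finType) (Ks : seq {set T}) (u : T) : nat :=
  count (fun K : {set T} => u \in K) Ks.

(* r(K), maximum over the vertex set S of the graph the partition refers to *)
Definition r_max (T : finType) (Ks : seq {set T}) (S : {set T}) : nat :=
  \max_(u in S) r_at Ks u.

Definition V1 (T : finType) (Ks : seq {set T}) : {set T} :=
  [set u | r_at Ks u == r_max Ks setT].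

Definition ess_step (T : finType) (Ks : seq {set T}) (W : {set T}) : {set T} :=
  W :\: [set v | has (fun K : {set T} => K :&: W == [set v]) Ks].

(* The sequence V^i is decreasing in a finite set, hence stable after at most
   #|T| steps; V^* is its stable value. *)
Definition essential (T : finType) (Ks : seq {set T}) : {set T} :=
  iter #|T| (ess_step Ks) (V1 Ks).

Definition restrict (T : finType) (Ks : seq {set T}) (S : {set T})
  : seq {set T} :=
  [seq K :&: S | K <- Ks & K :&: S != set0].

(* Main.v *)
Require Import Defs.
From HB Require Import structures.
From mathcomp Require Import all_boot all_order all_algebra.
From mathcomp.algebra_tactics Require Import ring lra.
Import Order.TTheory GRing.Theory Num.Theory.
Set Implicit Arguments. Unset Strict Implicit. Unset Printing Implicit Defensive.
Local Open Scope ring_scope.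

Definition Af (R : rcfType) (T : finType) (e : rel T) (f : T -> R) (v : T) : R :=
  \sum_u f u * (e u v)%:R.

Definition fx (R : rcfType) (T : finType) (S : {set T}) (x : 'rV[R]_#|S|) (t : T) : R :=
  \sum_(i < #|S|) (enum_val i == t)%:R * x 0 i.

Lemma fx_val (R : rcfType) (T : finType) (S : {set T}) (x : 'rV[R]_#|S|) j :
  fx x (enum_val j) = x 0 j.
Proof.
rewrite /fx (bigD1 j) //= eqxx mul1r big1 ?addr0 // => i ij.
by rewrite (inj_eq enum_val_inj) (negbTE ij) mul0r.
Qed.

Lemma fx_out (R : rcfType) (T : finType) (S : {set T}) (x : 'rV[R]_#|S|) t :
  t \notin S -> fx x t = 0.
Proof.
move=> tS; rewrite /fx big1 // => i _.
case: eqP => [E|_]; last by rewrite mul0r.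
by move: tS; rewrite -E enum_valP.
Qed.

Lemma fx_sum (R : rcfType) (T : finType) (S : {set T}) (x : 'rV[R]_#|S|) g :
  \sum_t fx x t * g t = \sum_i x 0 i * g (enum_val i).
Proof.
rewrite /fx; under eq_bigr do rewrite mulr_suml.
rewrite exchange_big; apply: eq_bigr => i _.
rewrite (bigD1 (enum_val i)) //= eqxx mul1r big1 ?addr0 // => t ti.
by rewrite eq_sym (negbTE ti) mul0r mul0r.
Qed.

Lemma mx_entry (R : rcfType) (T : finType) (e : rel T) (S : {set T})
  (x : 'rV[R]_#|S|) j :
  (x *m adj R e S) 0 j = Af e (fx x) (enum_val j).
Proof.
rewrite /Af fx_sum !mxE; apply: eq_bigr => i _; by rewrite mxE.
Qed.

Lemma eigS (R : rcfType) (T : finType) (e : rel T) (S : {set T}) (a : R) :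
  eigenvalue (adj R e S) a <-> exists f : T -> R,
    [/\ exists t, f t != 0, forall t, t \notin S -> f t = 0 &
        forall v, v \in S -> Af e f v = a * f v].
Proof.
split.
  move/eigenvalueP => [x xA x0]; exists (fx x); split.
  - have [j xj] : exists j, x 0 j != 0.
      apply/existsP; apply: contraR x0 => /existsPn H.
      by apply/eqP/rowP => j; rewrite mxE; apply/eqP; move: (H j); rewrite negbK.
    by exists (enum_val j); rewrite fx_val.
  - by move=> t; apply: fx_out.
  - move=> v vS; rewrite -(enum_rankK_in vS vS) -mx_entry xA mxE fx_val.
    by [].
move=> [f [[t ft] fS fA]].
have fxf : @fx R T S (\row_i f (enum_val i)) =1 f.
  move=> u; rewrite /fx.
  under eq_bigr do rewrite mxE.
  rewrite -(big_enum_val (fun w => (w == u)%:R * f w)) /=.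
  case: (boolP (u \in S)) => uS.
    rewrite (bigD1 u) //= eqxx mul1r big1 ?addr0 // => w /andP[_ /negbTE ->].
    by rewrite mul0r.
  rewrite (fS u uS) big1 // => w wS; case: eqP => [E|]; last by rewrite mul0r.
  by move: uS; rewrite -E wS.
apply/eigenvalueP; exists (\row_i f (@enum_val _ (pred_of_set S) i)).
  apply/rowP => j; rewrite mx_entry !mxE.
  rewrite (_ : Af e _ _ = Af e f (enum_val j)); last by apply: eq_bigr => u _; rewrite fxf.
  by rewrite fA // enum_valP.
have tS : t \in S by apply: contraR ft => /fS ->.
apply/eqP => /rowP /(_ (enum_rank_in tS t)); rewrite !mxE enum_rankK_in //.
by move/eqP; rewrite (negbTE ft).
Qed.

Lemma natr_count (R : rcfType) (T : Type) (P : pred T) (s : seq T) :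
  (count P s)%:R = \sum_(K <- s) (P K)%:R :> R.
Proof.
elim: s => [|x s IH]; first by rewrite big_nil.
by rewrite big_cons /= natrD IH.
Qed.

Lemma cnt_eq (R : rcfType) (T : finType) (e : rel T) (mu : nat) (Ks : seq {set T}) :
  irreflexive e -> clique_partition e mu Ks -> forall u v,
  (count (fun K : {set T} => (u \in K) && (v \in K)) Ks)%:R
   = (u == v)%:R * (r_at Ks u)%:R + mu%:R * (e u v)%:R :> R.
Proof.
move=> irr [cl part] u v.
case: (eqVneq u v) => [<-|uv].
  rewrite irr mulr0 addr0 mul1r /r_at; congr (_%:R).
  by apply: eq_count => K; rewrite andbb.
rewrite mul0r add0r.
case euv: (e u v); first by rewrite part // mulr1.
rewrite mulr0; apply/eqP; rewrite pnatr_eq0 -leqn0 leqNgt -has_count.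
apply/hasP => -[K KKs /andP[uK vK]].
by have := (cl K KKs).2 u v uK vK uv; rewrite euv.
Qed.

Definition sK (R : rcfType) (T : finType) (K : {set T}) (f : T -> R) : R :=
  \sum_u (u \in K)%:R * f u.

Lemma pointwise (R : rcfType) (T : finType) (e : rel T) (mu : nat) (Ks : seq {set T}) :
  irreflexive e -> clique_partition e mu Ks -> forall (f : T -> R) v,
  mu%:R * Af e f v = \sum_(K <- Ks) (v \in K)%:R * sK K f - (r_at Ks v)%:R * f v.
Proof.
move=> irr cp f v.
rewrite (eq_bigr (fun K : {set T} => \sum_u ((u \in K) && (v \in K))%:R * f u)); last first.
  by move=> K _; rewrite /sK mulr_sumr; apply: eq_bigr => u _; rewrite mulrA -natrM mulnb andbC.
rewrite exchange_big /=.
rewrite (eq_bigr (fun u => ((u == v)%:R * (r_at Ks u)%:R + mu%:R * (e u v)%:R) * f u)); last first.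
  by move=> u _; rewrite -mulr_suml -(natr_count R (fun K : {set T} => (u \in K) && (v \in K))) (cnt_eq R irr cp).
under eq_bigr do rewrite mulrDl.
rewrite big_split /= (bigD1 v) //= eqxx mul1r big1 ?addr0; last first.
  by move=> u /negbTE ->; rewrite !mul0r.
rewrite /Af mulr_sumr -[X in _ = _ + X - _]/(\sum_u _).
rewrite (addrC _ (\sum_u _)) addrK; apply: eq_bigr => u _; ring.
Qed.

Lemma quad (R : rcfType) (T : finType) (e : rel T) (mu : nat) (Ks : seq {set T}) :
  irreflexive e -> clique_partition e mu Ks -> forall (f : T -> R),
  mu%:R * \sum_v f v * Af e f v
   = \sum_(K <- Ks) sK K f ^+ 2 - \sum_v (r_at Ks v)%:R * f v ^+ 2.
Proof.
move=> irr cp f.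
rewrite mulr_sumr (eq_bigr (fun v => f v * (mu%:R * Af e f v))); last by move=> v _; ring.
under eq_bigr do rewrite (pointwise irr cp) mulrBr.
rewrite sumrB; congr (_ - _); last by apply: eq_bigr => v _; ring.
under eq_bigr do rewrite mulr_sumr.
rewrite exchange_big /=; apply: eq_bigr => K _.
by rewrite expr2 /sK mulr_suml; apply: eq_bigr => u _; ring.
Qed.

Lemma r_le (T : finType) (Ks : seq {set T}) u : (r_at Ks u <= r_max Ks setT)%N.
Proof. by rewrite /r_max; apply: (leq_bigmax_cond (P := fun u => u \in setT)); rewrite inE. Qed.

Lemma lowerq (R : rcfType) (T : finType) (e : rel T) (mu : nat) (Ks : seq {set T}) :
  irreflexive e -> clique_partition e mu Ks -> forall (f : T -> R),
  mu%:R * (\sum_v f v * Af e f v) + (r_max Ks setT)%:R * \sum_v f v ^+ 2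
   = \sum_(K <- Ks) sK K f ^+ 2
     + \sum_v ((r_max Ks setT)%:R - (r_at Ks v)%:R) * f v ^+ 2.
Proof.
move=> irr cp f; rewrite (quad irr cp).
under [X in _ = _ + X]eq_bigr do rewrite mulrBl.
rewrite sumrB mulr_sumr; ring.
Qed.

Lemma lower_nonneg (R : rcfType) (T : finType) (Ks : seq {set T}) (f : T -> R) :
  0 <= \sum_(K <- Ks) sK K f ^+ 2 /\
  0 <= \sum_v ((r_max Ks setT)%:R - (r_at Ks v)%:R) * f v ^+ 2.
Proof.
split; apply: sumr_ge0 => i _; first exact: sqr_ge0.
by apply: mulr_ge0; [rewrite subr_ge0 ler_nat r_le | exact: sqr_ge0].
Qed.

Lemma sumsq_gt0 (R : rcfType) (T : finType) (f : T -> R) t :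
  f t != 0 -> 0 < \sum_v f v ^+ 2.
Proof.
move=> ft; rewrite (bigD1 t) //=.
apply: ltr_wpDr; first by apply: sumr_ge0 => i _; exact: sqr_ge0.
by rewrite lt0r sqrf_eq0 ft sqr_ge0.
Qed.

Lemma eig_lb (R : rcfType) (T : finType) (e : rel T) (mu : nat) (Ks : seq {set T}) S a :
  (0 < mu)%N -> irreflexive e -> clique_partition e mu Ks ->
  eigenvalue (adj R e S) a -> - ((r_max Ks setT)%:R / mu%:R) <= a.
Proof.
move=> mu0 irr cp /eigS [f [[t ft] fS fA]].
have E : \sum_v f v * Af e f v = a * \sum_v f v ^+ 2.
  rewrite mulr_sumr; apply: eq_bigr => v _.
  case: (boolP (v \in S)) => vS; first by rewrite fA // expr2; ring.
  by rewrite fS // !mul0r expr2 mul0r mulr0.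
have := lowerq irr cp f; have [h1 h2] := lower_nonneg Ks f.
rewrite E => H.
have Q0 := sumsq_gt0 ft.
have mu0' : 0 < mu%:R :> R by rewrite ltr0n.
have H2 : 0 <= (mu%:R * a + (r_max Ks setT)%:R) * \sum_v f v ^+ 2.
  by rewrite mulrDl -mulrA H addr_ge0.
rewrite pmulr_lge0 // in H2.
have -> : a = (mu%:R * a + (r_max Ks setT)%:R) / mu%:R - (r_max Ks setT)%:R / mu%:R.
  by field; rewrite gt_eqF.
rewrite -subr_ge0 opprK subrK.
by apply: divr_ge0 => //; apply: ltW.
Qed.

Lemma eq_case (R : rcfType) (T : finType) (e : rel T) (mu : nat) (Ks : seq {set T}) (f : T -> R) :
  irreflexive e -> clique_partition e mu Ks ->
  mu%:R * (\sum_v f v * Af e f v) + (r_max Ks setT)%:R * \sum_v f v ^+ 2 = 0 ->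
  (forall K, K \in Ks -> sK K f = 0) /\
  (forall v, f v != 0 -> r_at Ks v = r_max Ks setT).
Proof.
move=> irr cp; rewrite (lowerq irr cp) => /eqP.
have [h1 h2] := lower_nonneg Ks f.
rewrite paddr_eq0 // => /andP[/eqP s1 /eqP s2]; split.
  move=> K KK; move/eqP: s1; rewrite psumr_eq0; last by move=> i _; exact: sqr_ge0.
  by move/allP/(_ K KK) => /= /eqP; move/eqP; rewrite sqrf_eq0 => /eqP.
move=> v fv.
have := psumr_eq0P _ s2 (i := v) isT.
move/(_ _)/eqP; rewrite mulf_eq0 sqrf_eq0 (negbTE fv) orbF subr_eq0 eqr_nat.
by move=> H; apply/esym/eqP; apply: H => i _; apply: mulr_ge0; [rewrite subr_ge0 ler_nat r_le | exact: sqr_ge0].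
Qed.

Lemma quadE (R : rcfType) (T : finType) (e : rel T) (S : {set T}) (f : T -> R) a :
  (forall t, t \notin S -> f t = 0) -> (forall v, v \in S -> Af e f v = a * f v) ->
  \sum_v f v * Af e f v = a * \sum_v f v ^+ 2.
Proof.
move=> fS fA; rewrite mulr_sumr; apply: eq_bigr => v _.
case: (boolP (v \in S)) => vS; first by rewrite fA // expr2; ring.
by rewrite fS // !mul0r expr2 mul0r mulr0.
Qed.

Lemma ess_V1 (T : finType) (Ks : seq {set T}) n :
  iter n (ess_step Ks) (V1 Ks) \subset V1 Ks.
Proof.
elim: n => [|n IH] /=; first exact: subxx.
by apply: subset_trans IH; rewrite /ess_step subsetDl.
Qed.

Lemma supp_ess (R : rcfType) (T : finType) (Ks : seq {set T}) (f : T -> R) :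
  (forall K, K \in Ks -> sK K f = 0) -> (forall v, f v != 0 -> v \in V1 Ks) ->
  forall n v, f v != 0 -> v \in iter n (ess_step Ks) (V1 Ks).
Proof.
move=> s0 v1; elim=> [|n IH] v fv //=; first exact: v1.
rewrite /ess_step in_setD IH // andbT inE.
apply/negP => /hasP [K KKs /eqP KW].
have : v \in K :&: iter n (ess_step Ks) (V1 Ks) by rewrite KW set11.
rewrite inE => /andP[vK _].
move: (s0 K KKs); rewrite /sK (bigD1 v) //= vK mul1r big1 ?addr0.
  by move/eqP; rewrite (negbTE fv).
move=> u uv; case: (boolP (u \in K)) => uK; last by rewrite mul0r.
case: (eqVneq (f u) 0) => [->|fu]; first by rewrite mulr0.
have : u \in K :&: iter n (ess_step Ks) (V1 Ks) by rewrite inE uK IH.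
by rewrite KW inE (negbTE uv).
Qed.

Lemma r_restrict (T : finType) (Ks : seq {set T}) (S : {set T}) u :
  u \in S -> r_at (restrict Ks S) u = r_at Ks u.
Proof.
move=> uS; rewrite /r_at /restrict count_map count_filter.
apply: eq_count => K /=; rewrite inE uS andbT.
case uK: (u \in K) => //=; apply/set0Pn; exists u; by rewrite inE uK uS.
Qed.

Lemma is_lambda_uniq (R : rcfType) n (A : 'M[R]_n) x y :
  is_lambda A x -> is_lambda A y -> x = y.
Proof. by move=> [ex lx] [ey ly]; apply: le_anti; rewrite lx // ly. Qed.

Theorem mainTheorem4 (R : rcfType) (T : finType) (e : rel T) (mu : nat)
    (Ks : seq {set T}) :
  symmetric e -> irreflexive e -> (0 < mu)%N -> clique_partition e mu Ks ->
  let Vs := essential Ks in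
  let Ks' := restrict Ks Vs in
  (is_lambda (adj R e setT) (- ((r_max Ks setT)%:R / mu%:R)) <->
     (Vs != set0 /\ is_lambda (adj R e Vs) (- ((r_max Ks' Vs)%:R / mu%:R))))
  /\
  (is_lambda (adj R e setT) (- ((r_max Ks setT)%:R / mu%:R)) ->
     (forall x, is_lambda (adj R e setT) x <-> is_lambda (adj R e Vs) x) /\
     (forall u, u \in Vs -> r_at Ks' u = r_max Ks setT)).
Proof.
move=> sym irr mu0 cp Vs Ks'.
set r := r_max Ks setT.
have mu0' : mu%:R != 0 :> R by rewrite pnatr_eq0 -lt0n.
have Vs1 : forall u, u \in Vs -> r_at Ks u = r.
  by move=> u /(subsetP (ess_V1 Ks #|T|)); rewrite inE => /eqP.
have rVs : forall u, u \in Vs -> r_at Ks' u = r.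
  by move=> u uV; rewrite r_restrict // Vs1.
have rmax : Vs != set0 -> r_max Ks' Vs = r.
  move=> /set0Pn [u uV]; apply/eqP; rewrite eqn_leq; apply/andP; split.
    by apply/bigmax_leqP => w wV; rewrite rVs.
  by rewrite -(rVs u uV); apply: (leq_bigmax_cond (P := fun w => w \in Vs)).
have fwd : is_lambda (adj R e setT) (- (r%:R / mu%:R)) ->
    Vs != set0 /\ eigenvalue (adj R e Vs) (- (r%:R / mu%:R)).
  move=> [/eigS [f [[t ft] fS fA]] _].
  have E := quadE fS fA.
  have [s0 rv] := eq_case irr cp (f := f) (ltac:(rewrite E; field => //)).
  have supp : forall v, f v != 0 -> v \in Vs.
    move=> v fv; apply: (supp_ess s0) => //.
    by move=> w fw; rewrite inE rv.
  split; first by apply/set0Pn; exists t; apply: supp.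
  apply/eigS; exists f; split; first by exists t.
    by move=> w wV; apply/eqP; apply: contraR wV; apply: supp.
  by move=> v _; apply: fA; rewrite inE.
have bwd : eigenvalue (adj R e Vs) (- (r%:R / mu%:R)) ->
    eigenvalue (adj R e setT) (- (r%:R / mu%:R)).
  move=> /eigS [f [[t ft] fS fA]].
  have E := quadE fS fA.
  have [s0 _] := eq_case irr cp (f := f) (ltac:(rewrite E; field => //)).
  apply/eigS; exists f; split; first by exists t.
    by move=> w; rewrite inE.
  move=> v _.
  have P := pointwise irr cp f v.
  rewrite big_seq big1 ?sub0r in P; last by move=> K KK; rewrite s0 // mulr0.
  have Hr : (r_at Ks v)%:R * f v = r%:R * f v.
    case: (eqVneq (f v) 0) => [->|fv]; first by rewrite !mulr0.
    by rewrite Vs1 //; apply/negPn; apply: contra fv => /fS ->.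
  rewrite Hr in P.
  have -> : Af e f v = (mu%:R * Af e f v) / mu%:R by field.
  by rewrite P; field.
split; first split.
- move=> H; have [nz ev] := fwd H; split => //.
  rewrite rmax //; split => // y.
  exact: (eig_lb mu0 irr cp).
- move=> [nz]; rewrite rmax // => -[ev _]; split; first exact: bwd.
  move=> y; exact: (eig_lb mu0 irr cp).
- move=> H; have [nz ev] := fwd H.
  have HV : is_lambda (adj R e Vs) (- (r%:R / mu%:R)).
    by split => // y; exact: (eig_lb mu0 irr cp).
  split => // x; split => Hx.
    by rewrite (is_lambda_uniq Hx H).
  by rewrite (is_lambda_uniq Hx HV).
Qed.
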